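(* On the two-letter alphabet $\{\mathtt A,\mathtt B\}$, there exists a $1$-regular word of length $n\ge 1$ if and only if $n=4k$ for some positive integer $k$. Moreover, in that case every $1$-regular word of length $4k$ over $\{\mathtt A,\mathtt B\}$ can be obtained from the word $\mathtt A^k\mathtt B^{2k}\mathtt A^k$ by a finite sequence of operations, each of which replaces a word of the form $x\,\mathtt{AB}\,y\,\mathtt{BA}\,z$ by $x\,\mathtt{BA}\,y\,\mathtt{AB}\,z$ (for some words $x,y,z$, possibly empty), with every intermediate word being $1$-regular.
   Context: For a word $u=u_1\cdots u_m$ over an alphabet $\mathcal A$ with $b$ letters and an integer $r\ge -1$, $u$ is $r$-regular if for every $k=0,1,\dots,r$ the sum $\sum_{1\le t\le m,\ u_t=c} t^k$ is the same for all letters $c\in\mathcal A$ (a letter not occurring contributes $0$). Here $\mathcal A=\{\mathtt A,\mathtt B\}$, and $\mathtt A^k$ denotes $k$ consecutive copies of $\mathtt A$. *)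

(* Defs.v *)
From HB Require Import structures.
From mathcomp Require Import all_boot.
Set Implicit Arguments. Unset Strict Implicit. Unset Printing Implicit Defensive.

Inductive letter := LA | LB.

Definition letter_eqb (a b : letter) : bool :=
  match a, b with LA, LA | LB, LB => true | _, _ => false end.
Lemma letter_eqP : Equality.axiom letter_eqb.
Proof. by case; case; constructor. Qed.
HB.instance Definition _ := hasDecEq.Build letter letter_eqP.

Definition word := seq letter.

Definition psum (u : word) (c : letter) (k : nat) : nat :=
  \sum_(t < size u | nth LA u t == c) (t.+1) ^ k.

Definition regular (r : nat) (u : word) : Prop :=
  forall k, k <= r -> forall c d : letter, psum u c k = psum u d k.

Definition swap_step (u v : word) : Prop :=
  exists x y z : word,
    u = x ++ [:: LA; LB] ++ y ++ [:: LB; LA] ++ z /\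
    v = x ++ [:: LB; LA] ++ y ++ [:: LA; LB] ++ z.

Inductive reach_reg1 : word -> word -> Prop :=
| rr_refl u : regular 1 u -> reach_reg1 u u
| rr_step u v w : regular 1 u -> swap_step u v -> reach_reg1 v w -> reach_reg1 u w.

Definition base_word (k : nat) : word := nseq k LA ++ nseq (2 * k) LB ++ nseq k LA.

(* Main.v *)
Require Import Defs.
From mathcomp Require Import all_boot.
From mathcomp Require Import zify.

Lemma sum_cons (F : nat -> nat) x u c :
  \sum_(t < (size u).+1 | nth LA (x::u) t == c) F t =
  (x == c) * F 0 + \sum_(t < size u | nth LA u t == c) F t.+1.
Proof.
rewrite big_mkcond big_ord_recl /= [in RHS]big_mkcond /=.
by case: (x == c); rewrite ?mul1n ?mul0n.
Qed.

Fixpoint cnt (c : letter) (u : word) : nat :=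
  if u is x :: u' then (x == c) + cnt c u' else 0.
Fixpoint sp (c : letter) (u : word) : nat :=
  if u is x :: u' then (x == c) + sp c u' + cnt c u' else 0.

Lemma psum0 u c : psum u c 0 = cnt c u.
Proof.
rewrite /psum; elim: u => [|x u IH]; first by rewrite big_ord0.
by rewrite (sum_cons (fun t => t.+1 ^ 0)) /= IH expn0 muln1.
Qed.

Lemma psum1_gen u c off :
  \sum_(t < size u | nth LA u t == c) (t.+1 + off) = sp c u + off * cnt c u.
Proof.
elim: u off => [|x u IH] off. by rewrite big_ord0 muln0.
rewrite (sum_cons (fun t => t.+1 + off)) /=.
under eq_bigr do rewrite addSnnS.
rewrite IH. case: (x == c) => /=. all: lia.
Qed.

Lemma psum1 u c : psum u c 1 = sp c u.
Proof.
have := psum1_gen u c 0; rewrite mul0n addn0 => <-.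
by apply: eq_bigr => i _; rewrite expn1 addn0.
Qed.

Definition reg1 u := cnt LA u = cnt LB u /\ sp LA u = sp LB u.

Lemma regE u : regular 1 u <-> reg1 u.
Proof.
split.
- move=> H; split; rewrite -?psum0 -?psum1; exact: H.
- move=> [H0 H1] k; case: k => [|[|//]] _ c d; rewrite ?psum0 ?psum1.
  + by case: c; case: d.
  + by case: c; case: d.
Qed.

Fixpoint sq (c : letter) (u : word) : nat :=
  if u is x :: u' then (x == c) + sq c u' + 2 * sp c u' + cnt c u' else 0.

Lemma cnt_cat c x y : cnt c (x ++ y) = cnt c x + cnt c y.
Proof. elim: x => [|a x IH] /=; lia. Qed.

Lemma sp_cat c x y : sp c (x ++ y) = sp c x + sp c y + size x * cnt c y.
Proof. elim: x => [|a x IH] /=; [lia | rewrite IH cnt_cat; lia]. Qed.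

Lemma sq_cat c x y : sq c (x ++ y) = sq c x + sq c y + 2 * size x * sp c y + size x * size x * cnt c y.
Proof. elim: x => [|a x IH] /=; [lia | rewrite IH sp_cat cnt_cat; nia]. Qed.

Lemma cnt_size u : cnt LA u + cnt LB u = size u.
Proof. elim: u => //= a u; case: a => /=; lia. Qed.

Lemma sp_size u : 2 * (sp LA u + sp LB u) = size u * (size u).+1.
Proof.
elim: u => //= a u IH; have := cnt_size u; case: a => /=; nia.
Qed.

Lemma cnt_nseq c m a : cnt c (nseq m a) = (a == c) * m.
Proof. elim: m => [|m IH] /=; first by case: (a == c).
rewrite IH; case: (a == c) => /=; lia. Qed.

Lemma sp_nseq c m a : 2 * sp c (nseq m a) = (a == c) * (m * m.+1).
Proof. elim: m => [|m IH] /=; first by case: (a == c).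
rewrite cnt_nseq; move: IH; case: (a == c) => /= IH; nia. Qed.

Lemma swap_inv c u v : swap_step u v ->
  [/\ size u = size v, cnt c u = cnt c v, sp c u = sp c v
     & (c = LB -> sq c u < sq c v)].
Proof.
move=> [x [y [z [-> ->]]]].
rewrite ?sq_cat ?sp_cat ?cnt_cat ?size_cat /=.
split => //; try (case: c => /=; lia).
move=> -> /=. nia.
Qed.
Lemma c2 r b e s k : 0 < b -> 0 < e -> r + 1 + s = b + e -> r+b+1+e+s = 4*k ->
 r*(r+1) + 2 + s*(s+1) + 2*e*s + 2*s + 2*b*(1+s) + 2*r*(1+s) = b*(b+1) + e*(e+1) + 2*e + 2*b*e + 2*r*(b+e) -> False.
Proof.
move=> b0 e0 H1 Hz Q.
have Hs : s = 2*k - 1 - r by lia.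
have He : e = 2 * k - b by lia.
have E : 2*k*k + b = 2*k*(r+1).
  have := congr1 (muln r) H1; have := congr1 (muln s) H1; have := congr1 (muln b) H1;
  have := congr1 (muln e) H1; have := congr1 (muln k) H1;
  have := congr1 (muln r) Hz; have := congr1 (muln s) Hz; have := congr1 (muln b) Hz;
  have := congr1 (muln e) Hz; have := congr1 (muln k) Hz. clear Hs He. lia.
case: (leqP (r+1) k) => h.
- have : 2*k*(r+1) <= 2*k*k by rewrite leq_mul2l h orbT.
  lia.
- have : 2*k*(k+1) <= 2*k*(r+1) by rewrite leq_mul2l; lia.
  lia.
Qed.

Lemma c1 r b s k : 0 < k -> r + s = b -> r+b+s = 4*k ->
  r*(r+1) + s*(s+1) + 2*b*s + 2*r*s = b*(b+1) + 2*r*b -> r = k /\ b = 2*k /\ s = k.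
Proof.
move=> k0 H1 Hz Q.
have E : r * r = s * s.
  subst b. lia.
have : r = s.
  case: (ltngtP r s) => // h.
  - have : r * r < s * s by apply: ltn_mul.
    lia.
  - have : s * s < r * r by apply: ltn_mul.
    lia.
lia.
Qed.

Lemma arithC1 r b s k : 0 < k -> reg1 (nseq r LA ++ nseq b LB ++ nseq s LA) ->
  r + b + s = 4 * k -> r = k /\ b = 2 * k /\ s = k.
Proof.
move=> k0 [Hc Hs] Hz.
move: Hc Hs; rewrite ?sp_cat ?cnt_cat ?cnt_nseq ?size_cat ?size_nseq /=.
have := sp_nseq LA r LA; have := sp_nseq LA s LA; have := sp_nseq LB b LB.
have := sp_nseq LA b LB; have := sp_nseq LB r LA; have := sp_nseq LB s LA.
rewrite /=. move=> h1 h2 h3 h4 h5 h6 Hc Hs.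
apply: c1 => //; lia.
Qed.

Lemma arithC2 r b e s k : 0 < b -> 0 < e ->
  reg1 (nseq r LA ++ nseq b LB ++ [:: LA] ++ nseq e LB ++ nseq s LA) ->
  r + b + 1 + e + s = 4 * k -> False.
Proof.
move=> b0 e0 [Hc Hs] Hz.
move: Hc Hs; rewrite ?sp_cat ?cnt_cat ?cnt_nseq ?size_cat ?size_nseq /=.
have := sp_nseq LA r LA; have := sp_nseq LA s LA; have := sp_nseq LB b LB.
have := sp_nseq LA b LB; have := sp_nseq LB r LA; have := sp_nseq LB s LA.
have := sp_nseq LA e LB; have := sp_nseq LB e LB.
rewrite /=. move=> h1 h2 h3 h4 h5 h6 h7 h8 Hc Hs.
apply: (@c2 r b e s k) => //; lia.
Qed.

Lemma nseq_swap (x : letter) i t : x :: nseq i x ++ t = nseq i x ++ x :: t.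
Proof. by elim: i => //= i ->. Qed.

Lemma rcons_nseq (x : letter) n : rcons (nseq n x) x = nseq n.+1 x.
Proof. by elim: n => //= n ->. Qed.

Lemma L_pre {c d} (cd : forall x : letter, x = c \/ x = d) (w : word) :
  w = nseq (size w) c \/ exists i w1, w = nseq i c ++ d :: w1.
Proof.
elim: w => [|x w IH]; first by left.
case: (cd x) => ->.
- case: IH => [E|[i [w1 E]]].
  + by left; rewrite /= -E.
  + by right; exists i.+1, w1; rewrite E.
- by right; exists 0, w.
Qed.

Lemma L_suf {c d} (cd : forall x : letter, x = c \/ x = d) (w : word) :
  w = nseq (size w) c \/ exists j w1, w = w1 ++ d :: nseq j c.
Proof.
elim/last_ind: w => [|w x IH]; first by left.
case: (cd x) => ->.
- case: IH => [E|[j [w1 E]]].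
  + by left; rewrite size_rcons -rcons_nseq -E.
  + by right; exists j.+1, w1; rewrite E rcons_cat rcons_cons rcons_nseq.
- by right; exists 0, w; rewrite cats1.
Qed.

Lemma cdAB x : x = LA \/ x = LB. Proof. by case: x; auto. Qed.
Lemma cdBA x : x = LB \/ x = LA. Proof. by case: x; auto. Qed.

Lemma key k u : 0 < k -> size u = 4 * k -> reg1 u ->
  u = base_word k \/ exists v, swap_step v u.
Proof.
move=> k0 Hz Hr.
case: (L_pre cdAB u) => [Eu | [r [w1 Eu]]].
  exfalso; move: Hr; rewrite Eu Hz => -[Hc _]; move: Hc; rewrite !cnt_nseq /=; lia.
case: (L_suf cdAB w1) => [Ew | [s [w2 Ew]]].
  exfalso; move: Hr Hz; rewrite Eu Ew => -[Hc _].
  move: Hc; rewrite !cnt_cat /= !cnt_nseq size_cat /= size_nseq /= ?size_nseq; lia.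
case: (L_pre cdBA w2) => [Ew2 | [i [w3 Ew2]]].
  have Eu' : u = nseq r LA ++ nseq (size w2).+2 LB ++ nseq s LA.
    by rewrite Eu Ew {1}Ew2 /= -!nseq_swap.
  have Hr' : reg1 (nseq r LA ++ nseq (size w2).+2 LB ++ nseq s LA) by rewrite -Eu'.
  have Hz' : r + (size w2).+2 + s = 4 * k.
    by move: Hz; rewrite Eu' !size_cat !size_nseq addnA.
  have [hr [hb hs]] := arithC1 r (size w2).+2 s k k0 Hr' Hz'.
  by left; rewrite Eu' /base_word hr hb hs.
case: (L_suf cdBA w3) => [Ew3 | [j [w4 Ew3]]].
  have Eu' : u = nseq r LA ++ nseq i.+1 LB ++ [:: LA] ++ nseq (size w3).+1 LB ++ nseq s LA.
    by rewrite Eu Ew Ew2 {1}Ew3 /= -catA /= -nseq_swap.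
  exfalso; apply: (@arithC2 r i.+1 (size w3).+1 s k) => //.
    by rewrite -Eu'.
  by move: Hz; rewrite Eu' !size_cat !size_nseq /=; lia.
right; exists ((nseq r LA ++ nseq i LB) ++ [:: LA; LB] ++ w4 ++ [:: LB; LA] ++ (nseq j LB ++ nseq s LA)).
exists (nseq r LA ++ nseq i LB), w4, (nseq j LB ++ nseq s LA); split => //.
rewrite Eu Ew Ew2 Ew3 -!catA /= nseq_swap -!catA /=.
by rewrite nseq_swap.
Qed.

Lemma swap_reg u v : swap_step u v -> (reg1 u <-> reg1 v).
Proof.
move=> H; have [_ ca sa _] := swap_inv LA _ _ H; have [_ cb sb _] := swap_inv LB _ _ H.
by rewrite /reg1 ca sa cb sb.
Qed.

Lemma reach_reg_r a b : reach_reg1 a b -> regular 1 b.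
Proof. by elim. Qed.

Lemma reach_app a b c : reach_reg1 a b -> swap_step b c -> reach_reg1 a c.
Proof.
move=> H; elim: H c => [u Hu | u v w Hu Huv _ IH] c Hs.
- refine (rr_step Hu Hs _); apply: rr_refl.
  by apply/regE; apply/(swap_reg _ _ Hs)/regE.
- exact: (rr_step Hu Huv (IH c Hs)).
Qed.

Lemma main2 k : 0 < k -> forall N u, sq LB u < N -> size u = 4 * k -> reg1 u ->
  reach_reg1 (base_word k) u.
Proof.
move=> k0; elim => [//|N IH] u Hq Hz Hr.
case: (key k u k0 Hz Hr) => [Eu | [v Hv]].
  by subst u; apply: rr_refl; apply/regE.
have [s1 _ _ _] := swap_inv LA _ _ Hv.
have [_ _ _ q] := swap_inv LB _ _ Hv.
apply: (reach_app _ _ _ _ Hv); apply: IH.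
- by have := q erefl; lia.
- by rewrite s1.
- by apply/(swap_reg _ _ Hv).
Qed.

Theorem mainTheorem7 :
  (forall n : nat, 1 <= n ->
     ((exists u : word, size u = n /\ regular 1 u) <->
      (exists k : nat, 0 < k /\ n = 4 * k)))
  /\
  (forall (k : nat) (u : word), 0 < k -> size u = 4 * k -> regular 1 u ->
     reach_reg1 (base_word k) u).
Proof.
split.
- move=> n n1; split.
  + move=> [u [Hn /regE [Hc Hs]]].
    have h1 := cnt_size u; have h2 := sp_size u.
    exists (sp LA u - cnt LA u * cnt LA u); split; nia.
  + move=> [k [k0 ->]]; exists (base_word k); split.
      by rewrite /base_word !size_cat !size_nseq; lia.
    apply/regE; rewrite /base_word /reg1 ?sp_cat ?cnt_cat ?cnt_nseq ?size_cat ?size_nseq /=.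
    have := sp_nseq LA k LA; have := sp_nseq LB k LA; have := sp_nseq LB (2*k) LB;
    have := sp_nseq LA (2*k) LB; rewrite /=; split; lia.
- move=> k u k0 Hz /regE Hr; exact: (main2 k k0 _ u (ltnSn _) Hz Hr).
Qed.
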